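(* Let $R$ be a commutative ring with identity, $I,J$ ideals of $R$, and $M$ a progenerator $R$-module (a finitely generated projective generator of the category of $R$-modules). If $M$ is $I$-coreduced, then $M$ is $I$-reduced. If $M$ is $(I,J)$-coprime, then $M$ is $(I,J)$-prime.
   Context: All rings are commutative with identity and modules are unital. An $R$-module $M$ is $I$-reduced if for all $m\in M$, $I^2m=0$ implies $Im=0$; $I$-coreduced if $IM=I^2M$; $(I,J)$-prime if for all $m\in M$, $IJm=0$ implies $Im=0$ or $Jm=0$; $(I,J)$-coprime if $IJM=IM$ or $IJM=JM$. *)

(* Defs.v *)
From HB Require Import structures.
From mathcomp Require Import all_boot all_order all_algebra.
Set Implicit Arguments. Unset Strict Implicit. Unset Printing Implicit Defensive.
Import GRing.Theory.
Local Open Scope ring_scope.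

Definition is_ideal (R : comPzRingType) (I : R -> Prop) : Prop :=
  [/\ I 0, (forall a b, I a -> I b -> I (a + b)) & (forall r a, I a -> I (r * a))].

Definition prod_ideal (R : comPzRingType) (I J : R -> Prop) : R -> Prop :=
  fun x => exists n (a b : 'I_n -> R),
    [/\ forall i, I (a i), forall i, J (b i) & x = \sum_(i < n) a i * b i].

Definition ideal_submod (R : comPzRingType) (I : R -> Prop) (M : lmodType R)
  : M -> Prop :=
  fun m => exists n (a : 'I_n -> R) (v : 'I_n -> M),
    (forall i, I (a i)) /\ m = \sum_(i < n) a i *: v i.

Definition annihilated (R : comPzRingType) (I : R -> Prop) (M : lmodType R)
  (m : M) : Prop := forall a, I a -> a *: m = 0.

Definition I_reduced (R : comPzRingType) (I : R -> Prop) (M : lmodType R) :=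
  forall m : M, annihilated (prod_ideal I I) m -> annihilated I m.

Definition I_coreduced (R : comPzRingType) (I : R -> Prop) (M : lmodType R) :=
  forall m : M, ideal_submod I m <-> ideal_submod (prod_ideal I I) m.

Definition IJ_prime (R : comPzRingType) (I J : R -> Prop) (M : lmodType R) :=
  forall m : M, annihilated (prod_ideal I J) m ->
    annihilated I m \/ annihilated J m.

Definition IJ_coprime (R : comPzRingType) (I J : R -> Prop) (M : lmodType R) :=
  (forall m : M, ideal_submod (prod_ideal I J) m <-> ideal_submod I m) \/
  (forall m : M, ideal_submod (prod_ideal I J) m <-> ideal_submod J m).

Definition fin_generated (R : comPzRingType) (M : lmodType R) : Prop :=
  exists n (v : 'I_n -> M), forall m : M,
    exists c : 'I_n -> R, m = \sum_(i < n) c i *: v i.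

Definition projective_mod (R : comPzRingType) (M : lmodType R) : Prop :=
  forall (N P : lmodType R) (f : {linear N -> P}) (g : {linear M -> P}),
    (forall p : P, exists n : N, f n = p) ->
    exists h : {linear M -> N}, forall m : M, f (h m) = g m.

Definition generator_mod (R : comPzRingType) (M : lmodType R) : Prop :=
  forall (N : lmodType R) (x : N),
    exists n (f : 'I_n -> {linear M -> N}) (v : 'I_n -> M),
      x = \sum_(i < n) f i (v i).

Definition progenerator (R : comPzRingType) (M : lmodType R) : Prop :=
  [/\ fin_generated M, projective_mod M & generator_mod M].

(* Main.v *)
Require Import Defs.
From mathcomp Require Import all_boot all_order all_algebra.
Import GRing.Theory.
Local Open Scope ring_scope.

Lemma key (R : comPzRingType) (K K' : R -> Prop) (M : lmodType R) :
  generator_mod M ->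
  (forall m : M, ideal_submod K m -> ideal_submod K' m) ->
  forall m : M, annihilated K' m -> annihilated K m.
Proof.
move=> gen H m Hm a Ha.
have [n [f [v E]]] := gen (R^o) 1.
have -> : a *: m = (a * (1 : R^o)) *: m by rewrite mulr1.
rewrite E mulr_sumr scaler_suml; apply: big1 => i _.
have -> : a * f i (v i) = f i (a *: v i) by rewrite linearZ.
have [k [b [w [Hb ->]]]] : ideal_submod K' (a *: v i).
  apply: H; exists 1%N, (fun=> a), (fun=> v i); split=> //.
  by rewrite big_ord1.
rewrite linear_sum scaler_suml; apply: big1 => j _.
rewrite linearZ /=.
have -> : (b j *: f i (w j) : R^o) = f i (w j) * b j by rewrite mulrC.
by rewrite -scalerA Hm ?scaler0.
Qed.

Theorem mainTheorem8 (R : comPzRingType) (I J : R -> Prop) (M : lmodType R) :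
  is_ideal I -> is_ideal J -> progenerator M ->
  (I_coreduced I M -> I_reduced I M) /\ (IJ_coprime I J M -> IJ_prime I J M).
Proof.
move=> _ _ [_ _ gen]; split.
  by move=> Hc m; apply: key gen _ m => x /(Hc x).
move=> [Hc|Hc] m Hm.
  by left; apply: key gen _ m Hm => x /(Hc x).
by right; apply: key gen _ m Hm => x /(Hc x).
Qed.
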